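(* For a definable set $X\subseteq Z^m\times R^n$ the following are equivalent: (1) $X$ is $Z$-internal; (2) the projection of $X$ on the $R$-coordinates (i.e. onto $R^n$) is finite; (3) there is a definable bijection from $X$ to a definable subset of $Z^{m+1}$.
   Context: Let $\mathfrak C$ be a monster model, $Z,R$ definable subsets of $\mathfrak C$ which are stably embedded (subsets of $Z^n$, resp. $R^n$, definable with parameters from $\mathfrak C$ are definable with parameters from $Z$, resp. $R$) and fully orthogonal (for all $m,n$, every definable subset of $Z^m\times R^n$ is a finite union of sets $U\times V$ with $U\subseteq Z^m$, $V\subseteq R^n$ definable). ''Definable'' means definable in $(Z,R)^{eq}$ (the two-sorted structure $(Z,R)$ with no connection between the sorts, expanded by imaginary sorts) with parameters from the monster model. A definable set $X$ is $Z$-internal if there is a definable surjection from $Z^k$ onto $X$ for some $k$. *)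

(* Defs.v *)
From mathcomp Require Import all_boot.
Set Implicit Arguments. Unset Strict Implicit. Unset Printing Implicit Defensive.

Definition tcat (M : Type) (a b : nat) (x : 'I_a -> M) (y : 'I_b -> M)
  : 'I_(a + b) -> M :=
  fun i => match split i with inl j => x j | inr j => y j end.
Definition tleft (M : Type) (a b : nat) (x : 'I_(a + b) -> M) : 'I_a -> M :=
  fun i => x (lshift b i).
Definition tright (M : Type) (a b : nat) (x : 'I_(a + b) -> M) : 'I_b -> M :=
  fun j => x (rshift a j).

(* ---------- a first-order structure, given by its 0-definable sets ----------
   (van den Dries' notion of a "structure on M": for each k a boolean algebra of
   subsets of M^k, closed under cylinders, containing the diagonals, closed under
   projections.  These are exactly the families of 0-definable sets of
   first-order structures on M.) *)
Record defstr (M : Type) := DefStr {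
  def0 : forall k : nat, (('I_k -> M) -> Prop) -> Prop;
  def0_T : forall k, def0 (fun _ : 'I_k -> M => True);
  def0_C : forall k (A : ('I_k -> M) -> Prop), def0 A -> def0 (fun x => ~ A x);
  def0_U : forall k (A B : ('I_k -> M) -> Prop), def0 A -> def0 B ->
             def0 (fun x => A x \/ B x);
  def0_cylL : forall k (A : ('I_k -> M) -> Prop), def0 A ->
             def0 (fun x : 'I_(1 + k) -> M => A (tright x));
  def0_cylR : forall k (A : ('I_k -> M) -> Prop), def0 A ->
             def0 (fun x : 'I_(k + 1) -> M => A (tleft x));
  def0_diag : forall k, def0 (fun x : 'I_k.+1 -> M => x ord0 = x ord_max);
  def0_proj : forall k (A : ('I_(k + 1) -> M) -> Prop), def0 A ->
             def0 (fun x : 'I_k -> M => exists y : 'I_1 -> M, A (tcat x y))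
}.

Definition definable_over (M : Type) (S : defstr M) (P : M -> Prop) (k : nat)
  (X : ('I_k -> M) -> Prop) : Prop :=
  exists (p : nat) (b : 'I_p -> M), (forall i, P (b i)) /\
    exists D : ('I_(k + p) -> M) -> Prop, def0 S D /\
      forall x, X x <-> D (tcat x b).

(* definable with parameters from the (monster) model *)
Definition definable (M : Type) (S : defstr M) (k : nat)
  (X : ('I_k -> M) -> Prop) : Prop := definable_over S (fun _ => True) X.

Definition in_ZR (M : Type) (Z R : M -> Prop) (m n : nat) (x : 'I_(m + n) -> M) :=
  (forall i, Z (tleft x i)) /\ (forall j, R (tright x j)).

Definition in_pow (M : Type) (Z : M -> Prop) (k : nat) (x : 'I_k -> M) :=
  forall i, Z (x i).

Definition stably_embedded (M : Type) (S : defstr M) (Z : M -> Prop) : Prop :=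
  forall k (X : ('I_k -> M) -> Prop),
    (forall x, X x -> in_pow Z x) -> definable S X -> definable_over S Z X.

Definition fully_orthogonal (M : Type) (S : defstr M) (Z R : M -> Prop) : Prop :=
  forall m n (X : ('I_(m + n) -> M) -> Prop),
    definable S X -> (forall x, X x -> in_ZR Z R x) ->
    exists (p : nat) (U : 'I_p -> ('I_m -> M) -> Prop)
                     (V : 'I_p -> ('I_n -> M) -> Prop),
      (forall i, definable S (U i) /\ forall u, U i u -> in_pow Z u) /\
      (forall i, definable S (V i) /\ forall v, V i v -> in_pow R v) /\
      (forall x, X x <-> exists i, U i (tleft x) /\ V i (tright x)).

Definition fun_graph (M : Type) (a b : nat) (A : ('I_a -> M) -> Prop)
  (B : ('I_b -> M) -> Prop) (G : ('I_(a + b) -> M) -> Prop) : Prop :=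
  (forall x y, G (tcat x y) -> A x /\ B y) /\
  (forall x, A x -> exists y, G (tcat x y)) /\
  (forall x y y', G (tcat x y) -> G (tcat x y') -> y = y').

Definition graph_surjective (M : Type) (a b : nat) (B : ('I_b -> M) -> Prop)
  (G : ('I_(a + b) -> M) -> Prop) : Prop :=
  forall y, B y -> exists x, G (tcat x y).

Definition graph_injective (M : Type) (a b : nat)
  (G : ('I_(a + b) -> M) -> Prop) : Prop :=
  forall x x' y, G (tcat x y) -> G (tcat x' y) -> x = x'.

Definition Z_internal (M : Type) (S : defstr M) (Z : M -> Prop) (d : nat)
  (X : ('I_d -> M) -> Prop) : Prop :=
  exists (k : nat) (G : ('I_(k + d) -> M) -> Prop),
    definable S G /\ fun_graph (fun z : 'I_k -> M => in_pow Z z) X G /\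
    graph_surjective X G.

Definition finite_proj_R (M : Type) (m n : nat) (X : ('I_(m + n) -> M) -> Prop)
  : Prop :=
  exists (p : nat) (r : 'I_p -> ('I_n -> M)),
    forall x, X x -> exists i, tright x = r i.

Definition infinite_set (M : Type) (Z : M -> Prop) : Prop :=
  forall (p : nat) (f : 'I_p -> M), exists z, Z z /\ forall i, z <> f i.

(* Main.v *)
Require Import Defs.
From mathcomp Require Import all_boot zify.
From Stdlib Require Import FunctionalExtensionality PropExtensionality Classical ClassicalEpsilon.
Set Implicit Arguments. Unset Strict Implicit. Unset Printing Implicit Defensive.

Section Tup.
Variable M : Type.

Lemma xval N (x : 'I_N -> M) (i j : 'I_N) : val i = val j -> x i = x j.
Proof. by move=> h; congr x; apply: val_inj. Qed.

Lemma tcat_lshift a b (x : 'I_a -> M) (y : 'I_b -> M) i : tcat x y (lshift b i) = x i.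
Proof. by rewrite /tcat (unsplitK (inl i : 'I_a + 'I_b)). Qed.

Lemma tcat_rshift a b (x : 'I_a -> M) (y : 'I_b -> M) i : tcat x y (rshift a i) = y i.
Proof. by rewrite /tcat (unsplitK (inr i : 'I_a + 'I_b)). Qed.

Lemma tleft_tcat a b (x : 'I_a -> M) (y : 'I_b -> M) : tleft (tcat x y) = x.
Proof. by apply: functional_extensionality => i; rewrite /tleft tcat_lshift. Qed.

Lemma tright_tcat a b (x : 'I_a -> M) (y : 'I_b -> M) : tright (tcat x y) = y.
Proof. by apply: functional_extensionality => i; rewrite /tright tcat_rshift. Qed.

Lemma tcat_tlr a b (w : 'I_(a + b) -> M) : tcat (tleft w) (tright w) = w.
Proof.
apply: functional_extensionality => i; rewrite /tcat /tleft /tright.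
by case: splitP => j /= h; apply: xval.
Qed.

Definition ocat a b N (g : 'I_a -> 'I_N) (h : 'I_b -> 'I_N) : 'I_(a + b) -> 'I_N :=
  fun i => match split i with inl j => g j | inr j => h j end.

Lemma ocatE a b N (g : 'I_a -> 'I_N) (h : 'I_b -> 'I_N) (w : 'I_N -> M) :
  (fun i => w (ocat g h i)) = tcat (fun i => w (g i)) (fun i => w (h i)).
Proof.
apply: functional_extensionality => i; rewrite /tcat /ocat.
by case: (split i).
Qed.

Lemma tcat_l a b (x : 'I_a -> M) (y : 'I_b -> M) (i : 'I_(a + b)) (h : (i : nat) < a) :
  tcat x y i = x (Ordinal h).
Proof.
rewrite /tcat; case: splitP => j /= e; first by apply: xval.
by exfalso; move: h; rewrite e; lia.
Qed.

Lemma tcat_r a b (x : 'I_a -> M) (y : 'I_b -> M) (i : 'I_(a + b)) (h : a <= (i : nat))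
  (h' : (i : nat) - a < b) :
  tcat x y i = y (Ordinal h').
Proof.
rewrite /tcat; case: splitP => j /= e.
  by exfalso; move: h; rewrite e; move: (ltn_ord j); lia.
by apply: xval => /=; rewrite e; lia.
Qed.


Definition tv N (x : 'I_N -> M) (n : nat) : option M :=
  match (insub n : option 'I_N) with Some i => Some (x i) | None => None end.

Lemma tv_ord N (x : 'I_N -> M) (i : 'I_N) : tv x i = Some (x i).
Proof. by rewrite /tv valK. Qed.

Lemma tv_in N (x : 'I_N -> M) n (h : n < N) : tv x n = Some (x (Ordinal h)).
Proof. by rewrite -[n]/(nat_of_ord (Ordinal h)) tv_ord. Qed.

Lemma tv_out N (x : 'I_N -> M) n (h : N <= n) : tv x n = None.
Proof. by rewrite /tv insubN // -leqNgt. Qed.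

Lemma tv_ext N (x y : 'I_N -> M) : (forall n, tv x n = tv y n) -> x = y.
Proof.
move=> H; apply: functional_extensionality => i.
by move: (H i); rewrite !tv_ord => -[].
Qed.

Lemma tv_tcat a b (x : 'I_a -> M) (y : 'I_b -> M) n :
  tv (tcat x y) n = if n < a then tv x n else tv y (n - a).
Proof.
case: (ltnP n (a + b)) => h; last first.
  rewrite tv_out //; case: ifP => h1; [exfalso; lia| rewrite tv_out //; lia].
rewrite tv_in; case: ifP => h1.
  by rewrite (tcat_l _ _ (h1 : (Ordinal h : nat) < a)) tv_in.
have h2 : a <= (Ordinal h : nat) by rewrite /=; lia.
have h3 : (Ordinal h : nat) - a < b by rewrite /=; lia.
by rewrite (tcat_r _ _ h2 h3) tv_in.
Qed.

Lemma tv_tright a b (x : 'I_(a + b) -> M) n : tv (tright x) n = tv x (a + n).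
Proof.
case: (ltnP n b) => h; last by rewrite !tv_out //; lia.
have h1 : a + n < a + b by lia.
by rewrite tv_in tv_in; congr Some; rewrite /tright /tleft; apply: xval.
Qed.

Lemma tv_tleft a b (x : 'I_(a + b) -> M) n :
  tv (tleft x) n = if n < a then tv x n else None.
Proof.
case: ifP => h; last by rewrite tv_out //; lia.
have h1 : n < a + b by lia.
by rewrite tv_in tv_in; congr Some; rewrite /tright /tleft; apply: xval.
Qed.

Lemma tv_cast k k' (e : k = k') (x : 'I_k' -> M) n :
  tv (fun i => x (cast_ord e i)) n = tv x n.
Proof.
case: (ltnP n k) => h; last by rewrite !tv_out //; lia.
have h1 : n < k' by rewrite -e.
by rewrite tv_in tv_in; congr Some; rewrite /tright /tleft; apply: xval.
Qed.

Lemma tv_fun N k (x : 'I_N -> M) (f : 'I_k -> 'I_N) n (h : n < k) :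
  tv (fun i => x (f i)) n = tv x (f (Ordinal h)).
Proof. by rewrite tv_in tv_ord. Qed.


Lemma tv_congr N (x : 'I_N -> M) n n' : n = n' -> tv x n = tv x n'.
Proof. by move->. Qed.

Variable S : defstr M.

Lemma d_ext k (A B : ('I_k -> M) -> Prop) :
  def0 S A -> (forall x, A x <-> B x) -> def0 S B.
Proof.
move=> hA H; have -> : B = A; last by [].
apply: functional_extensionality => x; apply: propositional_extensionality.
by split; move/H.
Qed.

Lemma d_and k (A B : ('I_k -> M) -> Prop) :
  def0 S A -> def0 S B -> def0 S (fun x => A x /\ B x).
Proof.
move=> hA hB.
have := def0_C (def0_U (def0_C hA) (def0_C hB)).
move/d_ext; apply => x; split.
  by move=> H; split; apply: NNPP => h; apply: H; [left|right].
by case=> h1 h2 [].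
Qed.

Lemma d_cast k k' (e : k = k') (A : ('I_k -> M) -> Prop) :
  def0 S A -> def0 S (fun x : 'I_k' -> M => A (fun i => x (cast_ord e i))).
Proof.
case: k' / e => hA; apply: (d_ext hA) => x.
by rewrite (_ : (fun i => x (cast_ord erefl i)) = x) //; apply: tv_ext => n; rewrite tv_cast.
Qed.

Lemma d_cylL a k (A : ('I_k -> M) -> Prop) :
  def0 S A -> def0 S (fun x : 'I_(a + k) -> M => A (tright x)).
Proof.
move=> hA; elim: a => [|a IH].
  have e : k = 0 + k by [].
  apply: (d_ext (d_cast e hA)) => x.
  by rewrite (_ : (fun i => x (cast_ord e i)) = tright x) //; apply: tv_ext => n; rewrite tv_cast tv_tright.
have e : 1 + (a + k) = a.+1 + k by lia.
apply: (d_ext (d_cast e (def0_cylL IH))) => x.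
rewrite (_ : tright (tright _) = tright x) //; apply: tv_ext => n.
by rewrite !tv_tright tv_cast; apply: tv_congr; lia.
Qed.

Lemma d_cylR b k (A : ('I_k -> M) -> Prop) :
  def0 S A -> def0 S (fun x : 'I_(k + b) -> M => A (tleft x)).
Proof.
move=> hA; elim: b => [|b IH].
  have e : k = k + 0 by lia.
  apply: (d_ext (d_cast e hA)) => x.
  rewrite (_ : (fun i => x (cast_ord e i)) = tleft x) //; apply: tv_ext => n; rewrite tv_cast tv_tleft.
  by case: ifP => // h; rewrite tv_out //; lia.
have e : (k + b) + 1 = k + b.+1 by lia.
apply: (d_ext (d_cast e (def0_cylR IH))) => x.
rewrite (_ : tleft (tleft _) = tleft x) //; apply: tv_ext => n.
rewrite !tv_tleft tv_cast; case: ifP => h //; case: ifP => h1 //; exfalso; lia.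
Qed.

Lemma d_eq N (i j : 'I_N) : def0 S (fun x : 'I_N -> M => x i = x j).
Proof.
wlog lt : i j / (i : nat) <= j.
  move=> H; case: (leqP i j) => h; first exact: H.
  by apply: (d_ext (H j i (ltnW h))) => x; split=> ->.
case: (ltnP i j) => h; last first.
  have -> : j = i by apply: val_inj => /=; lia.
  apply: (d_ext (@def0_T M S N)) => x. by [].
pose d := j - i.
have A1 := d_cylL i (def0_diag S d).
have A2 := d_cylR (N - j.+1) A1.
have e : i + d.+1 + (N - j.+1) = N by move: (ltn_ord j); rewrite /d; lia.
apply: (d_ext (d_cast e A2)) => x.
rewrite /tleft /tright.
have -> : x (cast_ord e (lshift (N - j.+1) (rshift i ord0))) = x i by apply: xval => /=; lia.
have -> : x (cast_ord e (lshift (N - j.+1) (rshift i ord_max))) = x j by apply: xval => /=; rewrite /d; lia.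
by [].
Qed.


Definition tnil : 'I_0 -> M.
Proof. by case. Defined.

Lemma tv_map N k (x : 'I_N -> M) (f : 'I_k -> 'I_N) (g : nat -> nat) :
  (forall i, val (f i) = g i) ->
  forall n, tv (fun i => x (f i)) n = if n < k then tv x (g n) else None.
Proof.
move=> hf n; case: ifP => h; last by rewrite tv_out //; lia.
by rewrite tv_in -(hf (Ordinal h)) tv_ord.
Qed.

Lemma tv_widen k (Y : 'I_k.+1 -> M) n :
  tv (fun t : 'I_k => Y (widen_ord (leqnSn k) t)) n = if n < k then tv Y n else None.
Proof. exact: (tv_map _ (g := id)). Qed.

Lemma tv_last k (Y : 'I_k.+1 -> M) n :
  tv (fun _ : 'I_1 => Y ord_max) n = if n == 0 then tv Y k else None.
Proof.
rewrite (tv_map _ (g := fun _ => k)) //; case: n => [|n] //=.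
Qed.

Lemma d_proj j k (C : ('I_(j + k) -> M) -> Prop) :
  def0 S C -> def0 S (fun x : 'I_j -> M => exists y : 'I_k -> M, C (tcat x y)).
Proof.
elim: k C => [|k IH] C hC.
  have e : j + 0 = j by lia.
  have E : forall (x : 'I_j -> M) (y : 'I_0 -> M), tcat x y = fun i => x (cast_ord e i).
    move=> x y; apply: tv_ext => n; rewrite tv_tcat tv_cast; case: ifP => // h.
    by rewrite !tv_out //; lia.
  apply: (d_ext (d_cast e hC)) => x; split.
    by move=> h; exists tnil; rewrite E.
  by case=> y; rewrite E.
have e : j + k.+1 = j + k + 1 by lia.
have h2 := IH _ (def0_proj (d_cast e hC)).
apply: (d_ext h2) => x; split.
  case=> y [y1 H]; exists (fun t : 'I_k.+1 => tcat y y1 (cast_ord (esym (addn1 k)) t)).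
  move: H; congr C; apply: tv_ext => n.
  rewrite !tv_cast !tv_tcat tv_cast tv_tcat.
  by repeat case: ifP => ? //; try (apply: tv_congr; lia); exfalso; lia.
case=> Y H; exists (fun t : 'I_k => Y (widen_ord (leqnSn k) t)), (fun _ => Y ord_max).
move: H; congr C; apply: tv_ext => n.
rewrite !tv_cast !tv_tcat tv_widen tv_last.
repeat case: ifP => ? //; try (apply: tv_congr; lia); try (exfalso; lia); try (rewrite tv_out //; lia).
Qed.

Lemma d_all q k (P : 'I_q -> ('I_k -> M) -> Prop) :
  (forall i, def0 S (P i)) -> def0 S (fun x => forall i, P i x).
Proof.
elim: q P => [|q IH] P hP.
  by apply: (d_ext (@def0_T M S k)) => x; split=> // _ [].
apply: (d_ext (d_and (hP ord0) (IH (fun i => P (lift ord0 i)) (fun i => hP _)))) => x.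
split; last by move=> h; split=> *; apply: h.
by case=> h0 h i; case: (unliftP ord0 i) => [j ->|->].
Qed.

Lemma d_pull k j (f : 'I_k -> 'I_j) (A : ('I_k -> M) -> Prop) :
  def0 S A -> def0 S (fun x : 'I_j -> M => A (fun i => x (f i))).
Proof.
move=> hA.
have hC := d_and (d_cylL j hA)
  (d_all (fun i : 'I_k => d_eq (rshift j i) (lshift k (f i)))).
apply: (d_ext (d_proj hC)) => x; split.
  case=> y [hA' hE]; rewrite tright_tcat in hA'.
  suff <- : y = (fun i => x (f i)) by [].
  by apply: functional_extensionality => i; move: (hE i); rewrite tcat_rshift tcat_lshift.
move=> h; exists (fun i => x (f i)); rewrite tright_tcat; split=> // i.
by rewrite tcat_rshift tcat_lshift.
Qed.


Lemma eqiff (P Q : Prop) : P = Q -> (P <-> Q).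
Proof. by move->. Qed.

Lemma D_ext k (A B : ('I_k -> M) -> Prop) :
  definable S A -> (forall x, A x <-> B x) -> definable S B.
Proof.
move=> hA H; have -> : B = A; last by [].
apply: functional_extensionality => x; apply: propositional_extensionality.
by split; move/H.
Qed.

Lemma D_of0 k (A : ('I_k -> M) -> Prop) : def0 S A -> definable S A.
Proof.
move=> hA; exists 0, tnil; split=> //.
exists (fun w : 'I_(k + 0) -> M => A (fun i => w (lshift 0 i))); split.
  exact: d_pull.
by move=> x; have := tleft_tcat x tnil; rewrite /tleft => ->.
Qed.

Lemma D_pull k j (f : 'I_k -> 'I_j) (A : ('I_k -> M) -> Prop) :
  definable S A -> definable S (fun x : 'I_j -> M => A (fun i => x (f i))).
Proof.
case=> p [b [_ [D [hD HA]]]]; exists p, b; split=> //.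
exists (fun w : 'I_(j + p) -> M =>
  D (fun i => w (ocat (fun a => lshift p (f a)) (fun c => rshift j c) i))); split.
  exact: d_pull.
move=> x; rewrite ocatE HA; apply: eqiff; congr D; congr tcat.
  by apply: functional_extensionality => i; rewrite tcat_lshift.
by apply: functional_extensionality => i; rewrite tcat_rshift.
Qed.


Lemma tleft_tcat' a b (x : 'I_a -> M) (y : 'I_b -> M) :
  (fun i => tcat x y (lshift b i)) = x.
Proof. exact: tleft_tcat. Qed.

Lemma D_and k (A B : ('I_k -> M) -> Prop) :
  definable S A -> definable S B -> definable S (fun x => A x /\ B x).
Proof.
case=> p1 [b1 [_ [D1 [hD1 HA]]]]; case=> p2 [b2 [_ [D2 [hD2 HB]]]].
exists (p1 + p2), (tcat b1 b2); split=> //.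
exists (fun w : 'I_(k + (p1 + p2)) -> M =>
  D1 (fun i => w (ocat (fun a => lshift (p1 + p2) a) (fun c => rshift k (lshift p2 c)) i)) /\
  D2 (fun i => w (ocat (fun a => lshift (p1 + p2) a) (fun c => rshift k (rshift p1 c)) i))).
split; first exact: d_and (d_pull _ hD1) (d_pull _ hD2).
move=> x; rewrite HA HB !ocatE tleft_tcat'.
have -> : (fun c => tcat x (tcat b1 b2) (rshift k (lshift p2 c))) = b1.
  by apply: functional_extensionality => c; rewrite tcat_rshift tcat_lshift.
have -> : (fun c => tcat x (tcat b1 b2) (rshift k (rshift p1 c))) = b2.
  by apply: functional_extensionality => c; rewrite !tcat_rshift.
by [].
Qed.

Lemma D_not k (A : ('I_k -> M) -> Prop) :
  definable S A -> definable S (fun x => ~ A x).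
Proof.
case=> p [b [_ [D [hD HA]]]]; exists p, b; split=> //.
exists (fun w => ~ D w); split; first exact: def0_C.
by move=> x; rewrite HA.
Qed.

Lemma D_or k (A B : ('I_k -> M) -> Prop) :
  definable S A -> definable S B -> definable S (fun x => A x \/ B x).
Proof.
move=> hA hB; apply: (D_ext (D_not (D_and (D_not hA) (D_not hB)))) => x.
split; last by move=> h [h1 h2]; case: h.
by move=> h; apply: NNPP => h'; apply: h; split=> h1; apply: h'; [left|right].
Qed.

Lemma D_T k : definable S (fun _ : 'I_k -> M => True).
Proof. exact: D_of0 (@def0_T M S k). Qed.

Lemma D_imp k (A B : ('I_k -> M) -> Prop) :
  definable S A -> definable S B -> definable S (fun x => A x -> B x).
Proof.
move=> hA hB; apply: (D_ext (D_or (D_not hA) hB)) => x.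
split; first by case=> h // /h.
by move=> h; case: (classic (A x)) => h1; [right; apply: h| left].
Qed.

Lemma D_ex j k (C : ('I_(j + k) -> M) -> Prop) :
  definable S C ->
  definable S (fun x : 'I_j -> M => exists y : 'I_k -> M, C (tcat x y)).
Proof.
case=> p [b [_ [D [hD HC]]]]; exists p, b; split=> //.
pose h := ocat (ocat (fun a => lshift k (lshift p a)) (fun c => rshift (j + p) c))
               (fun c => lshift k (rshift j c)).
exists (fun v : 'I_(j + p) -> M =>
  exists y : 'I_k -> M, D (fun i => tcat v y (h i))); split.
  exact: d_proj (d_pull _ hD).
move=> x; rewrite /h.
have E : forall y : 'I_k -> M,
  (fun i => tcat (tcat x b) y (ocat (ocat (fun a => lshift k (lshift p a))
     (fun c => rshift (j + p) c)) (fun c => lshift k (rshift j c)) i)) = tcat (tcat x y) b.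
  move=> y; rewrite !ocatE.
  have -> : (fun a => tcat (tcat x b) y (lshift k (lshift p a))) = x.
    by apply: functional_extensionality => c; rewrite !tcat_lshift.
  have -> : (fun c => tcat (tcat x b) y (rshift (j + p) c)) = y.
    by apply: functional_extensionality => c; rewrite !tcat_rshift.
  have -> : (fun c => tcat (tcat x b) y (lshift k (rshift j c))) = b.
    by apply: functional_extensionality => c; rewrite tcat_lshift tcat_rshift.
  by [].
by split; case=> y H; exists y; move: H; rewrite E HC.
Qed.


Lemma D_eq N (i j : 'I_N) : definable S (fun x : 'I_N -> M => x i = x j).
Proof. exact: D_of0 (d_eq i j). Qed.

Lemma D_const N (i : 'I_N) (c : M) : definable S (fun x : 'I_N -> M => x i = c).
Proof.
exists 1, (fun _ => c); split=> //.
exists (fun w : 'I_(N + 1) -> M => w (lshift 1 i) = w (rshift N ord0)); split.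
  exact: d_eq.
by move=> x; rewrite tcat_lshift tcat_rshift.
Qed.

Lemma D_all q k (P : 'I_q -> ('I_k -> M) -> Prop) :
  (forall i, definable S (P i)) -> definable S (fun x => forall i, P i x).
Proof.
elim: q P => [|q IH] P hP.
  by apply: (D_ext (@D_T k)) => x; split=> // _ [].
apply: (D_ext (D_and (hP ord0) (IH (fun i => P (lift ord0 i)) (fun i => hP _)))) => x.
split; last by move=> h; split=> *; apply: h.
by case=> h0 h i; case: (unliftP ord0 i) => [j ->|->].
Qed.

Lemma D_exf q k (P : 'I_q -> ('I_k -> M) -> Prop) :
  (forall i, definable S (P i)) -> definable S (fun x => exists i, P i x).
Proof.
move=> hP; apply: (D_ext (D_not (D_all (fun i => D_not (hP i))))) => x.
split; last by case=> i h H; exact: H i h.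
by move=> h; apply: NNPP => h'; apply: h => i hi; apply: h'; exists i.
Qed.

Lemma D_eqf q N (f g : 'I_q -> 'I_N) :
  definable S (fun x : 'I_N -> M => (fun i => x (f i)) = (fun i => x (g i))).
Proof.
apply: (D_ext (D_all (fun i => D_eq (f i) (g i)))) => x; split.
  by move=> h; apply: functional_extensionality.
by move=> h i; have := congr1 (fun F => F i) h.
Qed.

Lemma D_eqc q N (f : 'I_q -> 'I_N) (c : 'I_q -> M) :
  definable S (fun x : 'I_N -> M => (fun i => x (f i)) = c).
Proof.
apply: (D_ext (D_all (fun i => D_const (f i) (c i)))) => x; split.
  by move=> h; apply: functional_extensionality.
by move=> h i; have := congr1 (fun F => F i) h.
Qed.

Definition oswap a b : 'I_(b + a) -> 'I_(a + b) :=
  ocat (fun i => rshift a i) (fun i => lshift b i).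

Lemma D_exl j k (C : ('I_(k + j) -> M) -> Prop) :
  definable S C ->
  definable S (fun y : 'I_j -> M => exists x : 'I_k -> M, C (tcat x y)).
Proof.
move=> hC; have := D_ex (D_pull (@oswap j k) hC).
move/D_ext; apply=> y; rewrite /oswap.
have E : forall x : 'I_k -> M,
    (fun i => tcat y x (ocat (fun i => rshift j i) (fun i => lshift k i) i)) = tcat x y.
  move=> x; rewrite ocatE.
  have -> : (fun i => tcat y x (rshift j i)) = x.
    by apply: functional_extensionality => c; rewrite tcat_rshift.
  by rewrite tleft_tcat'.
by split; case=> x H; exists x; move: H; rewrite E.
Qed.


Lemma D_cst k (P : Prop) : definable S (fun _ : 'I_k -> M => P).
Proof.
case: (classic P) => h; first by apply: (D_ext (@D_T k)).
by apply: (D_ext (D_not (@D_T k))) => x; split=> // /(_ I).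
Qed.

Lemma in_pow_tcat (Z : M -> Prop) a b (x : 'I_a -> M) (y : 'I_b -> M) :
  in_pow Z x -> in_pow Z y -> in_pow Z (tcat x y).
Proof. by move=> hx hy i; rewrite /tcat; case: (split i). Qed.

Definition zinit m (y : 'I_m.+1 -> M) : 'I_m -> M :=
  fun t => y (widen_ord (leqnSn m) t).

Definition snoc m (u : 'I_m -> M) (c : M) : 'I_m.+1 -> M :=
  fun t => match unlift ord_max t with Some t' => u t' | None => c end.

Lemma unlift_widen m (t : 'I_m) : unlift ord_max (widen_ord (leqnSn m) t) = Some t.
Proof.
have -> : widen_ord (leqnSn m) t = lift ord_max t by apply: val_inj; exact: (esym (lift_max t)).
by rewrite liftK.
Qed.

Lemma zinit_snoc m (u : 'I_m -> M) c : zinit (snoc u c) = u.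
Proof.
apply: functional_extensionality => t; by rewrite /zinit /snoc unlift_widen.
Qed.

Lemma snoc_max m (u : 'I_m -> M) c : snoc u c ord_max = c.
Proof. by rewrite /snoc unlift_none. Qed.

Lemma snoc_eta m (y : 'I_m.+1 -> M) : snoc (zinit y) (y ord_max) = y.
Proof.
apply: functional_extensionality => t; rewrite /snoc /zinit.
case: (unliftP ord_max t) => [t' ->|->] //.
by apply: xval; exact: (esym (lift_max t')).
Qed.

Lemma in_pow_snoc (Z : M -> Prop) m (u : 'I_m -> M) c :
  in_pow Z u -> Z c -> in_pow Z (snoc u c).
Proof. by move=> hu hc t; rewrite /snoc; case: (unlift ord_max t). Qed.

Lemma in_pow_zinit (Z : M -> Prop) m (y : 'I_m.+1 -> M) :
  in_pow Z y -> in_pow Z (zinit y).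
Proof. by move=> h t; apply: h. Qed.

End Tup.

Lemma least_idx p (P : 'I_p -> Prop) :
  (exists i, P i) -> exists i, P i /\ forall i' : 'I_p, (i' : nat) < i -> ~ P i'.
Proof.
move=> [i0 h0]; apply: NNPP => H.
have K : forall n (i : 'I_p), (i : nat) < n -> ~ P i.
  elim=> [|n IH] i hi //= hP.
  case: (ltnP i n) => h; first exact: IH h hP.
  apply: H; exists i; split=> // i' hi'; apply: IH; lia.
exact: K (i0 : nat).+1 i0 (ltnSn _) h0.
Qed.

Lemma tleft_tright_eq (M : Type) a b (x y : 'I_(a + b) -> M) :
  tleft x = tleft y -> tright x = tright y -> x = y.
Proof. by move=> h1 h2; rewrite -(tcat_tlr x) -(tcat_tlr y) h1 h2. Qed.

Section Main.
Variables (M : Type) (S : defstr M) (Z R : M -> Prop).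
Hypothesis horth : fully_orthogonal S Z R.

Lemma fin_from_orth a n (W : ('I_(a + n) -> M) -> Prop) :
  definable S W -> (forall w, W w -> in_ZR Z R w) ->
  (forall u v v', W (tcat u v) -> W (tcat u v') -> v = v') ->
  forall m (X : ('I_(m + n) -> M) -> Prop) (v0 : 'I_n -> M),
  (forall x, X x -> exists u, W (tcat u (tright x))) -> finite_proj_R X.
Proof.
move=> hW hWsub huniq m X v0 hcov.
case: (horth hW hWsub) => p [U [V [hU [hV hWe]]]].
have hr : forall i, exists v1, forall u v, U i u -> V i v -> v = v1.
  move=> i; case: (classic (exists u v, U i u /\ V i v)) => [[u [v [hu hv]]]|hno].
    exists v => u' v' hu' hv'; apply: (huniq u).
      by apply/hWe; exists i; rewrite tleft_tcat tright_tcat.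
    by apply/hWe; exists i; rewrite tleft_tcat tright_tcat.
  by exists v0 => u v hu hv; exfalso; apply: hno; exists u, v.
exists p, (fun i => proj1_sig (constructive_indefinite_description _ (hr i))).
move=> x hx; case: (hcov x hx) => u /hWe; rewrite tleft_tcat tright_tcat.
case=> i [hu hv]; exists i.
exact: (proj2_sig (constructive_indefinite_description _ (hr i)) u).
Qed.

Hypothesis hZinf : infinite_set Z.

Lemma inj_seq p : exists c : nat -> M, (forall i, i < p -> Z (c i)) /\
  (forall i j, i < p -> j < p -> c i = c j -> i = j).
Proof.
elim: p => [|p [c [hc1 hc2]]].
  by case: (hZinf (@tnil M)) => z [hz _]; exists (fun _ => z).
case: (hZinf (fun i : 'I_p => c i)) => z [hz hne].
exists (fun i => if i == p then z else c i); split.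
  by move=> i hi; case: eqP => // /eqP h; apply: hc1; lia.
move=> i j hi hj; case: eqP => [->|/eqP h1]; case: eqP => [->|/eqP h2] // E.
- have hj' : j < p by lia.
  by case: (hne (Ordinal hj')).
- have hi' : i < p by lia.
  by case: (hne (Ordinal hi')).
- by apply: hc2 => //; lia.
Qed.


Lemma internal_fin m n (X : ('I_(m + n) -> M) -> Prop)
  (hXsub : forall x, X x -> in_ZR Z R x) (x0 : 'I_(m + n) -> M) :
  Z_internal S Z X -> finite_proj_R X.
Proof.
case=> k [G [hG [[hG1 [hG2 hG3]] hsur]]].
pose W := fun w : 'I_((k + m) + n) -> M =>
  G (tcat (tleft (tleft w)) (tcat (tright (tleft w)) (tright w))).
apply: (@fin_from_orth (k + m) n W _ _ _ m X (tright x0)).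
- have := D_pull (ocat (fun i : 'I_k => lshift n (lshift m i))
    (ocat (fun i : 'I_m => lshift n (rshift k i)) (fun i : 'I_n => rshift (k + m) i))) hG.
  move/D_ext; apply=> w; rewrite !ocatE; by split.
- move=> w hw; have [hz hx] := hG1 _ _ hw.
  have [hxl hxr] := hXsub _ hx; rewrite tleft_tcat tright_tcat in hxl hxr.
  split => //; rewrite -(tcat_tlr (tleft w)); exact: in_pow_tcat.
- move=> u v v' h h'; rewrite /W !tleft_tcat !tright_tcat in h h'.
  by have := hG3 _ _ _ h h'; move/(congr1 (@tright M m n)); rewrite !tright_tcat.
- move=> x hx; case: (hsur x hx) => z hz; exists (tcat z (tleft x)).
  by rewrite /W !tleft_tcat !tright_tcat tcat_tlr.
Qed.

Lemma bij_fin m n (X : ('I_(m + n) -> M) -> Prop)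
  (hXsub : forall x, X x -> in_ZR Z R x) (x0 : 'I_(m + n) -> M) :
  (exists (Y : ('I_(m.+1) -> M) -> Prop) (G : ('I_((m + n) + m.+1) -> M) -> Prop),
       definable S Y /\ (forall y, Y y -> in_pow Z y) /\
       definable S G /\ fun_graph X Y G /\ graph_injective G /\
       graph_surjective Y G) -> finite_proj_R X.
Proof.
case=> Y [G [hY [hYZ [hG [[hG1 [hG2 hG3]] [hinj hsur]]]]]].
pose W := fun w : 'I_((m + m.+1) + n) -> M =>
  G (tcat (tcat (tleft (tleft w)) (tright w)) (tright (tleft w))).
apply: (@fin_from_orth (m + m.+1) n W _ _ _ m X (tright x0)).
- have := D_pull (ocat (ocat (fun i : 'I_m => lshift n (lshift m.+1 i))
    (fun i : 'I_n => rshift (m + m.+1) i)) (fun i : 'I_m.+1 => lshift n (rshift m i))) hG.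
  move/D_ext; apply=> w; rewrite !ocatE; by split.
- move=> w hw; have [hx hy] := hG1 _ _ hw.
  have [hxl hxr] := hXsub _ hx; rewrite tleft_tcat tright_tcat in hxl hxr.
  split => //; rewrite -(tcat_tlr (tleft w)); apply: in_pow_tcat => //; exact: hYZ.
- move=> u v v' h h'; rewrite /W !tleft_tcat !tright_tcat in h h'.
  by have := hinj _ _ _ h h'; move/(congr1 (@tright M m n)); rewrite !tright_tcat.
- move=> x hx; case: (hG2 x hx) => y hy; exists (tcat (tleft x) y).
  by rewrite /W !tleft_tcat !tright_tcat tcat_tlr.
Qed.


Hypothesis hZdef : definable S (fun x : 'I_1 -> M => Z (x ord0)).

Lemma D_inpow k : definable S (fun z : 'I_k -> M => in_pow Z z).
Proof.
apply: (D_ext (D_all (fun i : 'I_k => D_pull (fun _ : 'I_1 => i) hZdef))) => z.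
exact: iff_refl.
Qed.

Lemma c_inj p (c : nat -> M) (hc2 : forall i j, i < p -> j < p -> c i = c j -> i = j)
  (i i' : 'I_p) : c i = c i' -> i = i'.
Proof. by move=> h; apply: val_inj; exact: hc2 _ _ (ltn_ord i) (ltn_ord i') h. Qed.

Lemma fin_internal m n (X : ('I_(m + n) -> M) -> Prop) (hX : definable S X)
  (hXsub : forall x, X x -> in_ZR Z R x) (x0 : 'I_(m + n) -> M) (hx0 : X x0) :
  finite_proj_R X -> Z_internal S Z X.
Proof.
case=> p [r hr]; case: (inj_seq p) => c [hc1 hc2].
pose P := fun w : 'I_(m.+1 + (m + n)) -> M =>
  X (tright w) /\ zinit (tleft w) = tleft (tright w) /\
  exists i : 'I_p, tright (tright w) = r i /\ tleft w ord_max = c i.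
pose G := fun w : 'I_(m.+1 + (m + n)) -> M => in_pow Z (tleft w) /\
  (P w \/ (~ exists x', P (tcat (tleft w) x')) /\ tright w = x0).
have dP : definable S P.
  have := (D_and (D_pull (fun i : 'I_(m + n) => rshift m.+1 i) hX)
    (D_and (D_eqf S (fun t : 'I_m => lshift (m + n) (widen_ord (leqnSn m) t))
                  (fun t => rshift m.+1 (lshift n t)))
      (D_exf (fun i : 'I_p => D_and (D_eqc S (fun t : 'I_n => rshift m.+1 (rshift m t)) (r i))
          (D_const S (lshift (m + n) ord_max) (c i)))))).
  move/D_ext; apply => w.
  exact: iff_refl.
exists m.+1, G; split; [|split].
- have := (D_and (D_pull (fun i => lshift (m + n) i) (@D_inpow m.+1))
    (D_or dP (D_and (D_not (D_pull (fun i => lshift (m + n) i) (D_ex dP)))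
       (D_eqc S (fun i => rshift m.+1 i) x0)))).
  move/D_ext; apply => w.
  exact: iff_refl.
- split; [|split].
  + move=> z x [hz hP]; rewrite tleft_tcat in hz; split=> //.
    rewrite tright_tcat in hP.
    case: hP => [[hx _]|[_ ->]]; last by [].
    by rewrite tright_tcat in hx.
  + move=> z hz; case: (classic (exists x', P (tcat z x'))) => [[x' hx']|hno].
      by exists x'; split; rewrite ?tleft_tcat //; left.
    by exists x0; rewrite /G tleft_tcat tright_tcat; split=> //; right.
  + move=> z x x' [_ h] [_ h']; rewrite tleft_tcat tright_tcat in h.
    rewrite tleft_tcat tright_tcat in h'.
    case: h => [h|[hno ex]]; case: h' => [h'|[hno' ex']].
    * move: h h'; rewrite /P !tleft_tcat !tright_tcat.
      case=> _ [e1 [i [ei e3]]] [_ [e1' [i' [ei' e3']]]].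
      have ii : i = i' by apply: (c_inj hc2); rewrite -e3 -e3'.
      by apply: tleft_tright_eq; rewrite -?e1 -?e1' ?ei ?ei' ?ii.
    * by exfalso; apply: hno'; exists x.
    * by exfalso; apply: hno; exists x'.
    * by rewrite ex ex'.
- move=> x hx; case: (hr x hx) => i ei; exists (snoc (tleft x) (c i)).
  rewrite /G tleft_tcat; split.
    by apply: in_pow_snoc; [exact: (hXsub x hx).1 | exact: hc1].
  left; rewrite /P tleft_tcat tright_tcat zinit_snoc snoc_max.
  by split=> //; split=> //; exists i.
Qed.


Lemma fin_bij m n (X : ('I_(m + n) -> M) -> Prop) (hX : definable S X)
  (hXsub : forall x, X x -> in_ZR Z R x) :
  finite_proj_R X ->
  exists (Y : ('I_(m.+1) -> M) -> Prop) (G : ('I_((m + n) + m.+1) -> M) -> Prop),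
       definable S Y /\ (forall y, Y y -> in_pow Z y) /\
       definable S G /\ fun_graph X Y G /\ graph_injective G /\
       graph_surjective Y G.
Proof.
case=> p [r hr]; case: (inj_seq p) => c [hc1 hc2].
pose G := fun w : 'I_((m + n) + m.+1) -> M =>
  X (tleft w) /\ zinit (tright w) = tleft (tleft w) /\
  exists i : 'I_p, (tright (tleft w) = r i /\
     (forall i' : 'I_p, (i' : nat) < i -> tright (tleft w) <> r i')) /\
     tright w ord_max = c i.
have dG : definable S G.
  have := (D_and (D_pull (fun i : 'I_(m + n) => lshift m.+1 i) hX)
    (D_and (D_eqf S (fun t : 'I_m => rshift (m + n) (widen_ord (leqnSn m) t))
                  (fun t => lshift m.+1 (lshift n t)))
      (D_exf (fun i : 'I_p => D_and
          (D_and (D_eqc S (fun t : 'I_n => lshift m.+1 (rshift m t)) (r i))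
             (D_all (fun i' : 'I_p => D_imp (D_cst _ _ ((i' : nat) < i))
                 (D_not (D_eqc S (fun t : 'I_n => lshift m.+1 (rshift m t)) (r i'))))))
          (D_const S (rshift (m + n) ord_max) (c i)))))).
  move/D_ext; apply => w.
  exact: iff_refl.
exists (fun y => exists x, G (tcat x y)), G; split; [|split; [|split; [|split; [|split]]]].
- exact: D_exl dG.
- move=> y [x]; rewrite /G tleft_tcat tright_tcat; case=> hx [e1 [i [_ e3]]].
  rewrite -(snoc_eta y) e1 e3; apply: in_pow_snoc; [exact: (hXsub x hx).1 | exact: hc1].
- exact: dG.
- split; [|split].
  + move=> x y hG; split; last by exists x.
    by move: hG; rewrite /G tleft_tcat; case.
  + move=> x hx; have [i [ei hmin]] := least_idx (hr x hx).
    exists (snoc (tleft x) (c i)); rewrite /G tleft_tcat tright_tcat zinit_snoc snoc_max.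
    split=> //; split=> //; exists i; split=> //; split=> // i' hi' e.
  + move=> x y y'; rewrite /G !tleft_tcat !tright_tcat.
    case=> _ [e1 [i [[ei hmin] e3]]] [_ [e1' [i' [[ei' hmin'] e3']]]].
    have ii : i = i'.
      case: (ltngtP i i') => h; last by apply: val_inj.
        by case: (hmin' i h).
      by case: (hmin i' h).
    by rewrite -(snoc_eta y) -(snoc_eta y') e1 e1' e3 e3' ii.
- move=> x x' y; rewrite /G !tleft_tcat !tright_tcat.
  case=> _ [e1 [i [[ei _] e3]]] [_ [e1' [i' [[ei' _] e3']]]].
  have ii : i = i' by apply: (c_inj hc2); rewrite -e3 -e3'.
  by apply: tleft_tright_eq; rewrite -?e1 -?e1' ?ei ?ei' ?ii.
- by move=> y.
Qed.

End Main.


Theorem proposition2p3 (M : Type) (S : defstr M) (Z R : M -> Prop)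
  (hZdef : definable S (fun x : 'I_1 -> M => Z (x ord0)))
  (hRdef : definable S (fun x : 'I_1 -> M => R (x ord0)))
  (hZinf : infinite_set Z)
  (hZse : stably_embedded S Z) (hRse : stably_embedded S R)
  (horth : fully_orthogonal S Z R)
  (m n : nat) (X : ('I_(m + n) -> M) -> Prop)
  (hXdef : definable S X) (hXsub : forall x, X x -> in_ZR Z R x)
  (hXne : exists x, X x) :
  (Z_internal S Z X <-> finite_proj_R X) /\
  (finite_proj_R X <->
     exists (Y : ('I_(m.+1) -> M) -> Prop) (G : ('I_((m + n) + m.+1) -> M) -> Prop),
       definable S Y /\ (forall y, Y y -> in_pow Z y) /\
       definable S G /\ fun_graph X Y G /\ graph_injective G /\
       graph_surjective Y G).
Proof.
case: hXne => x0 hx0; split; split.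
- move=> h; exact: (internal_fin horth hXsub x0 h).
- move=> h; exact: (fin_internal hZinf hZdef hXdef hXsub hx0 h).
- move=> h; exact: (fin_bij hZinf hXdef hXsub h).
- move=> h; exact: (bij_fin horth hXsub x0 h).
Qed.
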